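(* Let $G=(V,E)$ be a simple, undirected, unweighted, connected, locally finite graph. Then for every edge $i\sim j$, $$\kappa(i,j)\ \ge\ \mathrm{Ric}(i,j).$$
   Context: $d_v$ is the degree of $v$, $S_1(v)$ its set of neighbours, $d_G$ the shortest-path distance. For an edge $i\sim j$: $\sharp_\Delta(i,j)=S_1(i)\cap S_1(j)$; $\sharp_\square^i(i,j)=\{k\in S_1(i)\setminus (S_1(j)\cup\{j\}) : \exists\, w\in (S_1(k)\cap S_1(j))\setminus (S_1(i)\cup\{i\})\}$ and $\sharp_\square^j(i,j)$ symmetrically; $\gamma_{\max}(i,j)=\max\big\{\max_{k\in\sharp_\square^i}|(S_1(k)\cap S_1(j))\setminus(S_1(i)\cup\{i\})|,\ \max_{w\in\sharp_\square^j}|(S_1(w)\cap S_1(i))\setminus(S_1(j)\cup\{j\})|\big\}$. Balanced Forman curvature: $\mathrm{Ric}(i,j)=0$ if $\min\{d_i,d_j\}=1$; otherwise $$\mathrm{Ric}(i,j)=\frac{2}{d_i}+\frac{2}{d_j}-2+\frac{2|\sharp_\Delta|}{\max\{d_i,d_j\}}+\frac{|\sharp_\Delta|}{\min\{d_i,d_j\}}+\frac{\gamma_{\max}^{-1}}{\max\{d_i,d_j\}}\big(|\sharp_\square^i|+|\sharp_\square^j|\big),$$ where the last term is $0$ if $\sharp_\square^i=\emptyset$. Ollivier curvature: for $\alpha\in[0,1)$ let $\mu_v^\alpha$ be the probability measure with mass $\alpha$ at $v$, $(1-\alpha)/d_v$ at each neighbour of $v$, and $0$ elsewhere; $W_1$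 is the $L^1$-Wasserstein (transportation) distance with respect to $d_G$; $\kappa(i,j)=\lim_{\alpha\to1}\frac{1-W_1(\mu_i^\alpha,\mu_j^\alpha)}{1-\alpha}$. *)

(* Defs.v *)
(* A simple, undirected, locally finite graph on a vertex type V : eqType is given
   by its neighbour lists  nb : V -> seq V  (S_1(v) = nb v, d_v = size (nb v)). *)
From HB Require Import structures.
From mathcomp Require Import all_boot all_order all_algebra.
From mathcomp Require Import all_classical all_reals all_analysis.
Set Implicit Arguments. Unset Strict Implicit. Unset Printing Implicit Defensive.
Import Order.TTheory GRing.Theory Num.Theory.
Local Open Scope classical_set_scope.
Local Open Scope ring_scope.

Definition simple_graph (V : eqType) (nb : V -> seq V) : Prop :=
  (forall v, uniq (nb v)) /\
  (forall v, v \notin nb v) /\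
  (forall v w, (w \in nb v) = (v \in nb w)).

Definition adj (V : eqType) (nb : V -> seq V) (x y : V) : bool := y \in nb x.

Fixpoint walk (V : eqType) (nb : V -> seq V) (n : nat) (x y : V) : Prop :=
  match n with
  | 0 => x = y
  | n'.+1 => exists z, adj nb x z /\ walk nb n' z y
  end.

Definition connected_graph (V : eqType) (nb : V -> seq V) : Prop :=
  forall x y, exists n, walk nb n x y.

Definition dist (R : realType) (V : eqType) (nb : V -> seq V) (x y : V) : R :=
  inf [set (n%:R : R) | n in [set n : nat | walk nb n x y]].

Definition deg (V : eqType) (nb : V -> seq V) (v : V) : nat := size (nb v).

Definition sharp_tri (V : eqType) (nb : V -> seq V) (i j : V) : seq V :=
  [seq k <- nb i | k \in nb j].

Definition sq_witnesses (V : eqType) (nb : V -> seq V) (i j k : V) : seq V :=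
  [seq w <- nb k | (w \in nb j) && (w \notin nb i) && (w != i)].

Definition sharp_sq (V : eqType) (nb : V -> seq V) (i j : V) : seq V :=
  [seq k <- nb i | (k \notin nb j) && (k != j) && (sq_witnesses nb i j k != [::])].

Definition gamma_max (V : eqType) (nb : V -> seq V) (i j : V) : nat :=
  maxn (\max_(k <- sharp_sq nb i j) size (sq_witnesses nb i j k))
       (\max_(w <- sharp_sq nb j i) size (sq_witnesses nb j i w)).

Definition Ric (R : realType) (V : eqType) (nb : V -> seq V) (i j : V) : R :=
  let di : R := (deg nb i)%:R in
  let dj : R := (deg nb j)%:R in
  let dmax : R := (maxn (deg nb i) (deg nb j))%:R in
  let dmin : R := (minn (deg nb i) (deg nb j))%:R in
  let t : R := (size (sharp_tri nb i j))%:R in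
  if minn (deg nb i) (deg nb j) == 1%N then 0 else
    2 / di + 2 / dj - 2 + 2 * t / dmax + t / dmin +
    (if sharp_sq nb i j == [::] then 0
     else ((gamma_max nb i j)%:R)^-1 / dmax *
          ((size (sharp_sq nb i j))%:R + (size (sharp_sq nb j i))%:R)).

Definition mu (R : realType) (V : eqType) (nb : V -> seq V) (alpha : R) (v x : V) : R :=
  (if x == v then alpha else 0) +
  (if x \in nb v then (1 - alpha) / (deg nb v)%:R else 0).

Definition supp2 (V : eqType) (nb : V -> seq V) (i j : V) : seq V :=
  undup (i :: j :: nb i ++ nb j).

(* couplings (transport plans) between mu_i^alpha and mu_j^alpha; since both
   measures are supported in supp2 i j, every coupling is supported in
   supp2 i j x supp2 i j *)
Definition coupling (R : realType) (V : eqType) (nb : V -> seq V) (alpha : R)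
    (i j : V) (p : V -> V -> R) : Prop :=
  let S := supp2 nb i j in
  (forall x y, 0 <= p x y) /\
  (forall x y, (x \notin S) || (y \notin S) -> p x y = 0) /\
  (forall x, x \in S -> \sum_(y <- S) p x y = mu nb alpha i x) /\
  (forall y, y \in S -> \sum_(x <- S) p x y = mu nb alpha j y).

Definition W1 (R : realType) (V : eqType) (nb : V -> seq V) (alpha : R) (i j : V) : R :=
  inf [set \sum_(x <- supp2 nb i j) \sum_(y <- supp2 nb i j) p x y * dist R nb x y
      | p in [set p : V -> V -> R | coupling nb alpha i j p]].

(* Main.v *)
Require Import Defs.
From HB Require Import structures.
From mathcomp Require Import all_boot all_order all_algebra.
From mathcomp Require Import all_classical all_reals all_analysis.
From mathcomp Require Import ring lra.
Import Order.TTheory GRing.Theory Num.Theory.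
Import numFieldNormedType.Exports.
Local Open Scope classical_set_scope.
Local Open Scope ring_scope.

Section Main.
Variable R : realType.
Variable V : eqType.
Variable nb : V -> seq V.
Hypothesis Hsimple : simple_graph nb.
Hypothesis Hconn : connected_graph nb.

Lemma dist_le x y n : walk nb n x y -> dist R nb x y <= n%:R.
Proof.
move=> w; apply: ge_inf; last by exists n.
by exists 0 => _ [m _ <-]; exact: ler0n.
Qed.

Lemma dist_ge0 x y : 0 <= dist R nb x y.
Proof.
have [n wn] := Hconn x y.
apply: lb_le_inf; first by exists n%:R; exists n.
by move=> _ [m _ <-]; exact: ler0n.
Qed.

Lemma dist_ge1 x y : x != y -> 1 <= dist R nb x y.
Proof.
move=> xy; have [n wn] := Hconn x y.
apply: lb_le_inf; first by exists n%:R; exists n.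
move=> _ [[|m] /= wm <-]; first by rewrite wm eqxx in xy.
by rewrite ler1n.
Qed.

Lemma dist_xx x : dist R nb x x = 0.
Proof. by apply/eqP; rewrite eq_le dist_ge0 andbT (@dist_le x x 0 erefl). Qed.


Lemma sum_ind (s : seq V) v (F : V -> R) :
  uniq s -> v \in s -> \sum_(y <- s) ((y == v)%:R * F y) = F v.
Proof.
move=> us vs; rewrite (bigD1_seq v) //= eqxx mul1r big1 ?addr0 //.
by move=> y /negbTE ->; rewrite mul0r.
Qed.

Variables i j : V.
Hypothesis Hij : adj nb i j.

Definition S := supp2 nb i j.

Lemma uniqS : uniq S. Proof. exact: undup_uniq. Qed.
Lemma inSi : i \in S. Proof. by rewrite mem_undup inE eqxx. Qed.
Lemma inSj : j \in S. Proof. by rewrite mem_undup !inE eqxx orbT. Qed.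
Lemma inS_nbi x : x \in nb i -> x \in S.
Proof. by move=> h; rewrite mem_undup !inE mem_cat h !orbT. Qed.
Lemma inS_nbj x : x \in nb j -> x \in S.
Proof. by move=> h; rewrite mem_undup !inE mem_cat h !orbT. Qed.

Lemma nb_irr v : v \notin nb v. Proof. by case: Hsimple => _ []. Qed.
Lemma nb_sym v w : (w \in nb v) = (v \in nb w). Proof. by case: Hsimple => _ []. Qed.
Lemma nb_uniq v : uniq (nb v). Proof. by case: Hsimple. Qed.

Lemma ij_neq : i != j.
Proof. by apply/eqP => e; move: Hij; rewrite /adj e (negbTE (nb_irr j)). Qed.
Lemma ji : i \in nb j. Proof. by rewrite -nb_sym. Qed.

Definition cost (p : V -> V -> R) :=
  \sum_(x <- S) \sum_(y <- S) p x y * dist R nb x y.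

Lemma cost_ge0 p : (forall x y, 0 <= p x y) -> 0 <= cost p.
Proof.
move=> h; apply: sumr_ge0 => x _; apply: sumr_ge0 => y _.
by apply: mulr_ge0 => //; exact: dist_ge0.
Qed.

Lemma W1_le (a : R) p : coupling nb a i j p -> W1 nb a i j <= cost p.
Proof.
move=> cp; apply: ge_inf; last by exists p.
exists 0 => _ [q [q0 _] <-]; exact: cost_ge0.
Qed.

Lemma W1_ge (a l : R) : (exists p, coupling nb a i j p) ->
  (forall p, coupling nb a i j p -> l <= cost p) -> l <= W1 nb a i j.
Proof.
move=> [p cp] h; apply: lb_le_inf; first by exists (cost p); exists p.
by move=> _ [q cq <-]; exact: h.
Qed.


Definition delta (x y : V) : R := (x == i)%:R * (y == j)%:R.

Lemma mu_comb (t a : R) v x :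
  mu nb (t * a + (1 - t)) v x = t * mu nb a v x + (1 - t) * (x == v)%:R.
Proof. rewrite /mu; case: (x == v); case: (x \in nb v); rewrite /=; ring. Qed.

Lemma sum_delta_row x : \sum_(y <- S) delta x y = (x == i)%:R.
Proof.
rewrite /delta (eq_bigr (fun y => (y == j)%:R * (x == i)%:R)); last first.
  by move=> y _; rewrite mulrC.
exact: (sum_ind S j (fun _ => (x == i)%:R) uniqS inSj).
Qed.

Lemma sum_delta_col y : \sum_(x <- S) delta x y = (y == j)%:R.
Proof. exact: (sum_ind S i (fun _ => (y == j)%:R) uniqS inSi). Qed.

Lemma coupling_comb (t a : R) p : 0 <= t <= 1 -> coupling nb a i j p ->
  coupling nb (t * a + (1 - t)) i j (fun x y => t * p x y + (1 - t) * delta x y).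
Proof.
case/andP=> t0 t1 [p0 [pz [pr pc]]]; split; [|split; [|split]].
- move=> x y; apply: addr_ge0; apply: mulr_ge0 => //; first by rewrite subr_ge0.
  by rewrite /delta mulr_ge0.
- move=> x y h; rewrite pz // /delta.
  case/orP: h => h.
    have -> : (x == i) = false by apply/eqP => e; move: h; rewrite e inSi.
    by rewrite mul0r !mulr0 addr0.
  have -> : (y == j) = false by apply/eqP => e; move: h; rewrite e inSj.
  by rewrite !mulr0 addr0.
- move=> x xS.
  have -> : \sum_(y <- S) (t * p x y + (1 - t) * delta x y) =
    t * \sum_(y <- S) p x y + (1 - t) * \sum_(y <- S) delta x y.
    by rewrite big_split !mulr_sumr.
  rewrite pr // sum_delta_row.
  by rewrite mu_comb.
- move=> y yS.
  have -> : \sum_(x <- S) (t * p x y + (1 - t) * delta x y) =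
    t * \sum_(x <- S) p x y + (1 - t) * \sum_(x <- S) delta x y.
    by rewrite big_split !mulr_sumr.
  rewrite pc // sum_delta_col.
  by rewrite mu_comb.
Qed.

Lemma cost_lin t u p q :
  cost (fun x y => t * p x y + u * q x y) = t * cost p + u * cost q.
Proof.
rewrite /cost !mulr_sumr -big_split; apply: eq_bigr => x _ /=.
rewrite !mulr_sumr -big_split; apply: eq_bigr => y _ /=; ring.
Qed.

Lemma cost_delta : cost delta = dist R nb i j.
Proof.
rewrite /cost /delta.
rewrite (eq_bigr (fun x => (x == i)%:R * \sum_(y <- S) (y == j)%:R * dist R nb x y)); last first.
  by move=> x _; rewrite mulr_sumr; apply: eq_bigr => y _; rewrite mulrA.
rewrite (sum_ind S i (fun x => \sum_(y <- S) (y == j)%:R * dist R nb x y) uniqS inSi).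
exact: (sum_ind S j (fun y => dist R nb i y) uniqS inSj).
Qed.

Lemma dist_ij : dist R nb i j <= 1.
Proof. by apply: (@dist_le i j 1); exists j. Qed.

Lemma cost_lb (a : R) p : coupling nb a i j p ->
  a - (1 - a) / (deg nb j)%:R <= cost p.
Proof.
move=> [p0 [pz [pr pc]]].
have step : \sum_(x <- S) \sum_(y <- S) p x y * ((x == i)%:R - (y == i)%:R) <= cost p.
  apply: ler_sum => x _; apply: ler_sum => y _; apply: ler_wpM2l => //.
  have [->|xy] := eqVneq x y; first by rewrite subrr dist_ge0.
  apply: le_trans (dist_ge1 _ _ xy); rewrite lerBlDr; apply: ler_wpDr => //.
  by case: (x == i).
apply: le_trans step.
have e1 : \sum_(x <- S) \sum_(y <- S) p x y * ((x == i)%:R - (y == i)%:R) =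
   \sum_(x <- S) (x == i)%:R * \sum_(y <- S) p x y -
   \sum_(y <- S) (y == i)%:R * \sum_(x <- S) p x y.
  rewrite (eq_bigr (fun x => (x == i)%:R * \sum_(y <- S) p x y -
      \sum_(y <- S) p x y * (y == i)%:R)); last first.
    by move=> x _; rewrite mulr_sumr -sumrB; apply: eq_bigr => y _; ring.
  rewrite sumrB; congr (_ - _); rewrite exchange_big; apply: eq_bigr => y _.
  by rewrite mulr_sumr; apply: eq_bigr => x _; rewrite mulrC.
rewrite e1 (sum_ind S i (fun x => \sum_(y <- S) p x y) uniqS inSi).
rewrite (sum_ind S i (fun y => \sum_(x <- S) p x y) uniqS inSi).
rewrite pr ?inSi // pc ?inSi // /mu eqxx (negbTE (nb_irr i)) addr0.
by rewrite (negbTE (ij_neq)) add0r ji.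
Qed.


Lemma W1_comb (t a : R) : 0 < t <= 1 -> (exists p, coupling nb a i j p) ->
  W1 nb (t * a + (1 - t)) i j <= t * W1 nb a i j + (1 - t).
Proof.
move=> /andP[t0 t1] ne.
have h : (W1 nb (t * a + (1 - t)) i j - (1 - t)) / t <= W1 nb a i j.
  apply: W1_ge => // p cp; rewrite ler_pdivrMr //.
  have := W1_le _ _ (coupling_comb t a p _ cp); rewrite cost_lin cost_delta.
  rewrite (ltW t0) t1 => /(_ isT) hW.
  have hd : (1 - t) * dist R nb i j <= 1 - t.
    by rewrite -[X in _ <= X]mulr1 ler_wpM2l ?subr_ge0 // dist_ij.
  lra.
by move: h; rewrite ler_pdivrMr // => h; lra.
Qed.

Definition slope (a : R) := (1 - W1 nb a i j) / (1 - a).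

Lemma slope_mono (a1 a2 : R) : a1 <= a2 -> a2 < 1 ->
  (exists p, coupling nb a1 i j p) -> slope a1 <= slope a2.
Proof.
move=> a12 a21 ne.
have a11 : a1 < 1 by apply: le_lt_trans a21.
have p1 : 0 < 1 - a1 by rewrite subr_gt0.
have p2 : 0 < 1 - a2 by rewrite subr_gt0.
set t := (1 - a2) / (1 - a1).
have t0 : 0 < t by rewrite divr_gt0.
have t1 : t <= 1 by rewrite ler_pdivrMr // mul1r lerD2l lerN2.
have e : t * a1 + (1 - t) = a2.
  rewrite /t; field; by rewrite subr_eq0 eq_sym lt_eqF.
have := W1_comb t a1; rewrite t0 t1 e => /(_ isT ne) hW.
have es : slope a1 = t * (1 - W1 nb a1 i j) / (1 - a2).
  rewrite /slope /t; field.
  by rewrite !subr_eq0 !(eq_sym 1) !lt_eqF.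
rewrite es /slope; apply: ler_wpM2r; first by rewrite invr_ge0 ltW.
lra.
Qed.

Lemma slope_ub (a : R) : a < 1 -> (exists p, coupling nb a i j p) ->
  slope a <= 1 + 1 / (deg nb j)%:R.
Proof.
move=> a1 ne.
have p1 : 0 < 1 - a by rewrite subr_gt0.
have h : a - (1 - a) / (deg nb j)%:R <= W1 nb a i j.
  by apply: W1_ge => // p cp; exact: cost_lb _ _ cp.
rewrite /slope ler_pdivrMr //.
have -> : (1 + 1 / (deg nb j)%:R) * (1 - a) = (1 - a) + (1 - a) / (deg nb j)%:R.
  by rewrite mulrDl mul1r mulrC mulrA mulr1.
lra.
Qed.


Lemma sum_bool (s : seq V) (P : pred V) :
  \sum_(y <- s) (P y)%:R = (count P s)%:R :> R.
Proof.
elim: s => [|y s IH]; first by rewrite big_nil.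
by rewrite big_cons IH /= natrD.
Qed.

Lemma count_eq (s1 s2 : seq V) (P Q : pred V) : uniq s1 -> uniq s2 ->
  (forall y, (y \in s1) && P y = (y \in s2) && Q y) -> count P s1 = count Q s2.
Proof.
move=> u1 u2 h; rewrite -!size_filter; apply: perm_size.
apply: uniq_perm; rewrite ?filter_uniq // => y.
by rewrite !mem_filter andbC h andbC.
Qed.

Lemma sum_ge_elem (s : seq V) (F : V -> R) x : x \in s ->
  (forall y, 0 <= F y) -> F x <= \sum_(y <- s) F y.
Proof.
move=> xs h; elim: s xs => [|y s IH] //; rewrite in_cons big_cons.
case/orP => [/eqP <-|xs]; first by rewrite lerDl sumr_ge0.
by apply: le_trans (IH xs) _; rewrite lerDr.
Qed.

Lemma di_pos : (0 < deg nb i)%N.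
Proof. by rewrite /deg; move: Hij; rewrite /adj; case: (nb i). Qed.
Lemma dj_pos : (0 < deg nb j)%N.
Proof. by rewrite /deg; have := ji; case: (nb j). Qed.

Definition ai : R := (deg nb i)%:R^-1.
Definition bj : R := (deg nb j)%:R^-1.
Definition Mx : R := Num.max ai bj.
Definition mn : R := Num.min ai bj.

Lemma ai_gt0 : 0 < ai. Proof. by rewrite /ai invr_gt0 ltr0n di_pos. Qed.
Lemma bj_gt0 : 0 < bj. Proof. by rewrite /bj invr_gt0 ltr0n dj_pos. Qed.
Lemma ai_le1 : ai <= 1.
Proof. by rewrite /ai invf_le1 ?ltr0n ?di_pos // ler1n di_pos. Qed.
Lemma bj_le1 : bj <= 1.
Proof. by rewrite /bj invf_le1 ?ltr0n ?dj_pos // ler1n dj_pos. Qed.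
Lemma mn_ai : mn <= ai. Proof. by rewrite /mn ge_min lexx. Qed.
Lemma mn_bj : mn <= bj. Proof. by rewrite /mn ge_min lexx orbT. Qed.
Lemma mn_ge0 : 0 <= mn. Proof. by rewrite /mn le_min !ltW ?ai_gt0 ?bj_gt0. Qed.
Lemma Mx_ai : ai <= Mx. Proof. by rewrite /Mx le_max lexx. Qed.
Lemma Mx_bj : bj <= Mx. Proof. by rewrite /Mx le_max lexx orbT. Qed.
Lemma Mx_le1 : Mx <= 1. Proof. by rewrite /Mx ge_max ai_le1 bj_le1. Qed.

Definition inA (x : V) : bool := (x \in nb i) && (x \notin nb j) && (x != j).
Definition inB (y : V) : bool := (y \in nb j) && (y \notin nb i) && (y != i).
Definition inT (x : V) : bool := (x \in nb i) && (x \in nb j).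

Definition Lf x : R := Mx * (x == i)%:R + ai * (x \in nb i)%:R.
Definition Rf y : R := Mx * (y == j)%:R + bj * (y \in nb j)%:R.
Definition dg x : R := bj * (x == i)%:R + ai * (x == j)%:R + mn * (inT x)%:R.

Lemma i_nbi : (i \in nb i) = false. Proof. exact: negbTE (nb_irr i). Qed.
Lemma j_nbj : (j \in nb j) = false. Proof. exact: negbTE (nb_irr j). Qed.
Lemma ij_nb : j \in nb i. Proof. exact: Hij. Qed.
Lemma ij_f : (i == j) = false. Proof. exact: negbTE ij_neq. Qed.
Lemma ji_neq : (j == i) = false. Proof. by rewrite eq_sym (negbTE ij_neq). Qed.

Lemma dg_ge0 x : 0 <= dg x.
Proof.
have a0 := ltW ai_gt0; have b0 := ltW bj_gt0; have m0 := mn_ge0.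
by rewrite /dg !addr_ge0 // mulr_ge0.
Qed.

Lemma dg_Lf x : dg x <= Lf x.
Proof.
rewrite /dg /Lf /inT.
have [->|xi] := eqVneq x i; first by rewrite i_nbi ij_f /=; rewrite !mulr0 !mulr1 !addr0 Mx_bj.
have [->|xj] := eqVneq x j; first by rewrite ij_nb j_nbj /= !mulr0 !mulr1 !addr0 add0r.
rewrite !mulr0 !add0r.
case: (x \in nb i); case: (x \in nb j) => /=; rewrite ?mulr0 ?mulr1 ?mn_ai //.
exact: ltW ai_gt0.
Qed.

Lemma dg_Rf x : dg x <= Rf x.
Proof.
rewrite /dg /Rf /inT.
have [->|xi] := eqVneq x i.
  by rewrite i_nbi ji ij_f /= !mulr0 !mulr1 !addr0 add0r.
have [->|xj] := eqVneq x j; first by rewrite ij_nb j_nbj /= !mulr0 !mulr1 !addr0 add0r Mx_ai.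
rewrite !mulr0 !add0r.
case: (x \in nb i); case: (x \in nb j) => /=; rewrite ?mulr0 ?mulr1 ?mn_bj //.
exact: ltW bj_gt0.
Qed.


Definition ed x y : bool := inA x && inB y && (y \in nb x).
Definition gam : nat := gamma_max nb i j.
Definition cc : R := mn / gam%:R.
Definition fl x y : R := cc * (ed x y)%:R.
Definition out x : R := \sum_(y <- S) fl x y.
Definition inn y : R := \sum_(x <- S) fl x y.

Lemma cc_ge0 : 0 <= cc. Proof. by rewrite /cc divr_ge0 ?mn_ge0. Qed.
Lemma fl_ge0 x y : 0 <= fl x y. Proof. by rewrite /fl mulr_ge0 ?cc_ge0. Qed.

Lemma out_eq x : inA x -> out x = cc * (size (sq_witnesses nb i j x))%:R.
Proof.
move=> hx; rewrite /out /fl -mulr_sumr sum_bool; congr (_ * _%:R).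
rewrite /sq_witnesses size_filter; apply: count_eq; rewrite ?uniqS ?nb_uniq //.
move=> y; rewrite /ed hx /= /inB; case: (boolP (y \in nb j)) => yj /=.
  rewrite inS_nbj //=.
  by case: (y \in nb x); case: (y \in nb i); case: (y == i).
by rewrite !andbF.
Qed.

Lemma out_zero x : ~~ inA x -> out x = 0.
Proof. by move=> h; rewrite /out big1 // => y _; rewrite /fl /ed (negbTE h) /= mulr0. Qed.

Lemma inn_eq y : inB y -> inn y = cc * (size (sq_witnesses nb j i y))%:R.
Proof.
move=> hy; rewrite /inn /fl -mulr_sumr sum_bool; congr (_ * _%:R).
rewrite /sq_witnesses size_filter; apply: count_eq; rewrite ?uniqS ?nb_uniq //.
move=> x; rewrite /ed hy andbT (nb_sym x y) /inA; case: (boolP (x \in nb i)) => xi /=.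
  rewrite inS_nbi //=.
  by case: (x \in nb y); case: (x \in nb j); case: (x == j).
by rewrite !andbF.
Qed.

Lemma inn_zero y : ~~ inB y -> inn y = 0.
Proof. by move=> h; rewrite /inn big1 // => x _; rewrite /fl /ed (negbTE h) andbF /= mulr0. Qed.

Lemma size_wit_le x : inA x -> (size (sq_witnesses nb i j x) <= gam)%N.
Proof.
move=> hx; case e: (size (sq_witnesses nb i j x)) => [|n] //.
have mem : x \in sharp_sq nb i j.
  move: hx; rewrite /inA /sharp_sq mem_filter -size_eq0 e /= => /andP[/andP[-> ->] ->].
  by [].
rewrite -e /gam /gamma_max; apply: leq_trans (leq_maxl _ _).
exact: (leq_bigmax_seq x mem).
Qed.

Lemma size_wit_le' y : inB y -> (size (sq_witnesses nb j i y) <= gam)%N.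
Proof.
move=> hy; case e: (size (sq_witnesses nb j i y)) => [|n] //.
have mem : y \in sharp_sq nb j i.
  move: hy; rewrite /inB /sharp_sq mem_filter -size_eq0 e /= => /andP[/andP[-> ->] ->].
  by [].
rewrite -e /gam /gamma_max; apply: leq_trans (leq_maxr _ _).
exact: (leq_bigmax_seq y mem).
Qed.

Lemma cc_mul_le n : (n <= gam)%N -> cc * n%:R <= mn.
Proof.
rewrite /cc; case g: gam => [|g'].
  by rewrite leqn0 => /eqP ->; rewrite mulr0 mn_ge0.
move=> hn; rewrite -mulrA; apply: ler_piMr; first exact: mn_ge0.
by rewrite mulrC ler_pdivrMr ?ltr0n // mul1r ler_nat.
Qed.

Lemma inA_vals x : inA x -> Lf x = ai /\ dg x = 0.
Proof.
rewrite /inA => /andP[/andP[xi xj] xnj].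
have xni : (x == i) = false by apply/eqP => e; move: xi; rewrite e i_nbi.
rewrite /Lf /dg /inT xni xi (negbTE xnj) (negbTE xj) /=.
by split; rewrite ?mulr0 ?mulr1 ?add0r ?addr0.
Qed.

Lemma inB_vals y : inB y -> Rf y = bj /\ dg y = 0.
Proof.
rewrite /inB => /andP[/andP[yj yi] yni].
have ynj : (y == j) = false by apply/eqP => e; move: yj; rewrite e j_nbj.
rewrite /Rf /dg /inT ynj yj (negbTE yni) (negbTE yi) /=.
by split; rewrite ?mulr0 ?mulr1 ?add0r ?addr0.
Qed.

Lemma out_le x : out x <= Lf x - dg x.
Proof.
case: (boolP (inA x)) => hx; last by rewrite out_zero // subr_ge0 dg_Lf.
have [-> ->] := inA_vals _ hx; rewrite subr0 out_eq //.
apply: le_trans (mn_ai); apply: cc_mul_le; exact: size_wit_le.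
Qed.

Lemma inn_le y : inn y <= Rf y - dg y.
Proof.
case: (boolP (inB y)) => hy; last by rewrite inn_zero // subr_ge0 dg_Rf.
have [-> ->] := inB_vals _ hy; rewrite subr0 inn_eq //.
apply: le_trans (mn_bj); apply: cc_mul_le; exact: size_wit_le'.
Qed.


Definition rL x : R := Lf x - dg x - out x.
Definition rR y : R := Rf y - dg y - inn y.
Definition Z : R := \sum_(x <- S) rL x.
Definition q x y : R := dg x * (x == y)%:R + fl x y + rL x * rR y / Z.
Definition pp x y : R := (1 - Mx) / 2 * delta x y + q x y / 2.

Lemma rL_ge0 x : 0 <= rL x. Proof. by rewrite /rL subr_ge0 out_le. Qed.
Lemma rR_ge0 y : 0 <= rR y. Proof. by rewrite /rR subr_ge0 inn_le. Qed.
Lemma Z_ge0 : 0 <= Z. Proof. by apply: sumr_ge0 => x _; exact: rL_ge0. Qed.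

Lemma notS x : x \notin S ->
  [/\ (x == i) = false, (x == j) = false, (x \in nb i) = false & (x \in nb j) = false].
Proof.
move=> h; split; apply/negP => e; move: h.
- by rewrite (eqP e) inSi.
- by rewrite (eqP e) inSj.
- by rewrite inS_nbi.
- by rewrite inS_nbj.
Qed.

Lemma notS_vals x : x \notin S ->
  [/\ dg x = 0, Lf x = 0, Rf x = 0, rL x = 0 & rR x = 0].
Proof.
move=> h; have [e1 e2 e3 e4] := notS _ h.
have hA : ~~ inA x by rewrite /inA e3.
have hB : ~~ inB x by rewrite /inB e4.
have d0 : dg x = 0 by rewrite /dg /inT e1 e2 e3 /= !mulr0 !addr0.
have l0 : Lf x = 0 by rewrite /Lf e1 e3 !mulr0 addr0.
have r0 : Rf x = 0 by rewrite /Rf e2 e4 !mulr0 addr0.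
split => //; first by rewrite /rL d0 l0 out_zero // !subr0.
by rewrite /rR d0 r0 inn_zero // !subr0.
Qed.

Lemma sum_nbi : \sum_(x <- S) (x \in nb i)%:R = (deg nb i)%:R :> R.
Proof.
rewrite sum_bool /deg -(count_predT (nb i)); congr (_%:R).
apply: count_eq; rewrite ?uniqS ?nb_uniq // => y.
by rewrite andbT; case e: (y \in nb i); rewrite ?andbF ?andbT ?inS_nbi.
Qed.

Lemma sum_nbj : \sum_(x <- S) (x \in nb j)%:R = (deg nb j)%:R :> R.
Proof.
rewrite sum_bool /deg -(count_predT (nb j)); congr (_%:R).
apply: count_eq; rewrite ?uniqS ?nb_uniq // => y.
by rewrite andbT; case e: (y \in nb j); rewrite ?andbF ?andbT ?inS_nbj.
Qed.

Definition tt : R := (size (sharp_tri nb i j))%:R.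

Lemma sum_T : \sum_(x <- S) (inT x)%:R = tt.
Proof.
rewrite sum_bool /tt /sharp_tri size_filter; congr (_%:R).
apply: count_eq; rewrite ?uniqS ?nb_uniq // => y.
rewrite /inT; case e: (y \in nb i); rewrite ?andbF ?andbT ?inS_nbi //=.
Qed.

Lemma sum_eqv v (c : R) : v \in S -> \sum_(x <- S) (x == v)%:R * c = c.
Proof. by move=> h; rewrite (sum_ind S v (fun _ => c) uniqS h). Qed.

Lemma ai_di : ai * (deg nb i)%:R = 1.
Proof. by rewrite /ai mulVf // pnatr_eq0 -lt0n di_pos. Qed.
Lemma bj_dj : bj * (deg nb j)%:R = 1.
Proof. by rewrite /bj mulVf // pnatr_eq0 -lt0n dj_pos. Qed.

Lemma sum_Lf : \sum_(x <- S) Lf x = Mx + 1.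
Proof.
rewrite /Lf big_split /= -!mulr_sumr.
rewrite (eq_bigr (fun x => (x == i)%:R * 1)); last by move=> x _; rewrite mulr1.
by rewrite sum_eqv ?inSi // sum_nbi mulr1 ai_di.
Qed.

Lemma sum_Rf : \sum_(x <- S) Rf x = Mx + 1.
Proof.
rewrite /Rf big_split /= -!mulr_sumr.
rewrite (eq_bigr (fun x => (x == j)%:R * 1)); last by move=> x _; rewrite mulr1.
by rewrite sum_eqv ?inSj // sum_nbj mulr1 bj_dj.
Qed.

Lemma sum_dg : \sum_(x <- S) dg x = bj + ai + mn * tt.
Proof.
rewrite /dg !big_split /= -!mulr_sumr sum_T.
rewrite (eq_bigr (fun x => (x == i)%:R * 1)); last by move=> x _; rewrite mulr1.
rewrite sum_eqv ?inSi //.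
rewrite (eq_bigr (fun x => (x == j)%:R * 1)); last by move=> x _; rewrite mulr1.
by rewrite sum_eqv ?inSj // !mulr1.
Qed.

Definition FF : R := \sum_(x <- S) out x.

Lemma sum_inn : \sum_(y <- S) inn y = FF.
Proof. by rewrite /FF /inn /out exchange_big. Qed.

Lemma Z_eq : Z = Mx + 1 - (bj + ai + mn * tt) - FF.
Proof. by rewrite /Z /rL !sumrB sum_Lf sum_dg. Qed.

Lemma sum_rR : \sum_(y <- S) rR y = Z.
Proof. by rewrite Z_eq /rR !sumrB sum_Rf sum_dg sum_inn. Qed.

Lemma rL_Z0 x : Z = 0 -> rL x = 0.
Proof.
move=> z0; case: (boolP (x \in S)) => h; last by case: (notS_vals _ h).
apply/eqP; rewrite eq_le rL_ge0 andbT -z0.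
by apply: sum_ge_elem => // y; exact: rL_ge0.
Qed.

Lemma rR_Z0 y : Z = 0 -> rR y = 0.
Proof.
move=> z0; case: (boolP (y \in S)) => h; last by case: (notS_vals _ h).
apply/eqP; rewrite eq_le rR_ge0 andbT -z0 -sum_rR.
by apply: sum_ge_elem => // x; exact: rR_ge0.
Qed.

Lemma q_row x : x \in S -> \sum_(y <- S) q x y = Lf x.
Proof.
move=> xS; rewrite /q !big_split /=.
rewrite (eq_bigr (fun y => (y == x)%:R * dg x)); last by move=> y _; rewrite mulrC eq_sym.
rewrite (sum_ind S x (fun _ => dg x) uniqS xS) -/(out x).
rewrite -mulr_suml -mulr_sumr sum_rR.
have [z0|zn] := eqVneq Z 0.
  have h := rL_Z0 x z0; rewrite h mul0r mul0r addr0; move: h; rewrite /rL; lra.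
by rewrite -mulrA mulfV // mulr1 /rL; ring.
Qed.

Lemma q_col y : y \in S -> \sum_(x <- S) q x y = Rf y.
Proof.
move=> yS; rewrite /q !big_split /=.
rewrite (eq_bigr (fun x => (x == y)%:R * dg x)); last by move=> x _; rewrite mulrC.
rewrite (sum_ind S y (fun x => dg x) uniqS yS) -/(inn y).
rewrite -mulr_suml -mulr_suml -/Z.
have [z0|zn] := eqVneq Z 0.
  have h := rR_Z0 y z0; rewrite h mulr0 mul0r addr0; move: h; rewrite /rR; lra.
by rewrite mulrAC mulfV // mul1r /rR; ring.
Qed.


Lemma q_ge0 x y : 0 <= q x y.
Proof.
rewrite /q !addr_ge0 ?fl_ge0 //; first by rewrite mulr_ge0 ?dg_ge0.
by rewrite divr_ge0 ?Z_ge0 // mulr_ge0 ?rL_ge0 ?rR_ge0.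
Qed.

Lemma pp_coupling : coupling nb (1/2) i j pp.
Proof.
have M1 : 0 <= 1 - Mx by rewrite subr_ge0 Mx_le1.
split; [|split; [|split]].
- move=> x y; rewrite /pp; apply: addr_ge0; last by rewrite divr_ge0 ?q_ge0.
  by rewrite mulr_ge0 ?divr_ge0 // /delta mulr_ge0.
- move=> x y h.
  have hq : q x y = 0.
    case/orP: h => h; have [d0 l0 r0 rl0 rr0] := notS_vals _ h.
      rewrite /q d0 rl0 !mul0r add0r addr0 /fl /ed.
      have [_ _ e3 _] := notS _ h; by rewrite /inA e3 /= mulr0.
    rewrite /q rr0 mulr0 !mul0r addr0 /fl /ed.
    have [_ _ _ e4] := notS _ h; rewrite /inB e4 andbF /= mulr0 addr0.
    by case: eqP => [->|]; rewrite ?d0 ?mul0r ?mulr0.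
  have hd : delta x y = 0.
    rewrite /delta; case/orP: h => h; have [e1 e2 _ _] := notS _ h.
      by rewrite e1 mul0r.
    by rewrite e2 mulr0.
  by rewrite /pp hq hd mulr0 mul0r addr0.
- move=> x xS.
  have -> : \sum_(y <- S) pp x y =
    (1 - Mx) / 2 * \sum_(y <- S) delta x y + (\sum_(y <- S) q x y) / 2.
    by rewrite /pp big_split /= mulr_suml mulr_sumr.
  rewrite sum_delta_row q_row // /Lf /mu /ai.
  by case: (x == i); case: (x \in nb i); rewrite /=; lra.
- move=> y yS.
  have -> : \sum_(x <- S) pp x y =
    (1 - Mx) / 2 * \sum_(x <- S) delta x y + (\sum_(x <- S) q x y) / 2.
    by rewrite /pp big_split /= mulr_suml mulr_sumr.
  rewrite sum_delta_col q_col // /Rf /mu /bj.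
  by case: (y == j); case: (y \in nb j); rewrite /=; lra.
Qed.


Lemma walk_cat m n x z y : walk nb m x z -> walk nb n z y -> walk nb (m + n) x y.
Proof.
elim: m x => [|m IH] x /=; first by move=> ->.
by move=> [w [a wm]] wn; exists w; split => //; exact: IH.
Qed.

Definition close (u v : V) : bool := (u == v) || (v \in nb u).

Lemma close_walk u v : close u v -> exists2 n, (n <= 1)%N & walk nb n u v.
Proof.
case/orP => [/eqP ->|h]; first by exists 0%N.
by exists 1%N => //; exists v.
Qed.

Lemma dist_ex x y k : (exists2 n, (n <= k)%N & walk nb n x y) -> dist R nb x y <= k%:R.
Proof. by move=> [n nk w]; apply: le_trans (dist_le _ _ _ w) _; rewrite ler_nat. Qed.

Lemma chain2 x u y : close x u -> close u y -> dist R nb x y <= 2%:R.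
Proof.
move=> /close_walk[m m1 wm] /close_walk[n n1 wn]; apply: dist_ex.
by exists (m + n)%N; [rewrite -[2%N]/(1 + 1)%N leq_add | exact: (walk_cat _ _ _ _ _ wm wn)].
Qed.

Lemma chain3 x u v y : close x u -> close u v -> close v y -> dist R nb x y <= 3%:R.
Proof.
move=> /close_walk[m m1 wm] /close_walk[n n1 wn] /close_walk[k k1 wk]; apply: dist_ex.
exists (m + n + k)%N; first by rewrite -[3%N]/(1 + 1 + 1)%N !leq_add.
exact: (walk_cat _ _ _ _ _ (walk_cat _ _ _ _ _ wm wn) wk).
Qed.

Lemma dist_case x y : (x == i) || (x \in nb i) -> (y == j) || (y \in nb j) ->
  dist R nb x y <= 2 + (inA x && inB y)%:R.
Proof.
move=> hx hy.
have cxi : close x i.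
  by rewrite /close; case/orP: hx => [/eqP ->|h]; rewrite ?eqxx // (nb_sym x i) h orbT.
have cjy : close j y.
  by rewrite /close; case/orP: hy => [/eqP ->|h]; rewrite ?eqxx ?h ?orbT.
have c2 : dist R nb x y <= 2%:R -> dist R nb x y <= 2 + (inA x && inB y)%:R.
  by move=> h; apply: le_trans h _; rewrite lerDl.
case: (boolP (close x j)) => cxj; first exact/c2/(chain2 _ _ _ cxj cjy).
case: (boolP (close i y)) => ciy; first exact/c2/(chain2 _ _ _ cxi ciy).
have hA : inA x.
  move: cxj hx; rewrite /close /inA (nb_sym x j) negb_or => /andP[xj xnj].
  case/orP => [/eqP e|->]; last by rewrite xnj xj.
  by move: xnj; rewrite e ji.
have hB : inB y.
  move: ciy hy; rewrite /close /inB negb_or eq_sym => /andP[yi ynj].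
  case/orP => [/eqP e|->]; last by rewrite ynj yi.
  by move: ynj; rewrite e ij_nb.
rewrite hA hB; apply: le_trans (chain3 _ _ _ _ cxi (_ : close i j) cjy) _.
  by rewrite /close ij_nb orbT.
by rewrite -natrD.
Qed.

Lemma rL_supp x : rL x != 0 -> (x == i) || (x \in nb i).
Proof.
apply: contraR; rewrite negb_or => /andP[xi xn].
have xj : (x == j) = false by apply/eqP => e; move: xn; rewrite e ij_nb.
have hA : ~~ inA x by rewrite /inA (negbTE xn).
by rewrite /rL out_zero // /Lf /dg /inT (negbTE xi) xj (negbTE xn) /= !mulr0 !addr0 !subr0.
Qed.

Lemma rR_supp y : rR y != 0 -> (y == j) || (y \in nb j).
Proof.
apply: contraR; rewrite negb_or => /andP[yj yn].
have yi : (y == i) = false by apply/eqP => e; move: yn; rewrite e ji.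
have hB : ~~ inB y by rewrite /inB (negbTE yn).
by rewrite /rR inn_zero // /Rf /dg /inT (negbTE yj) yi (negbTE yn) andbF /= !mulr0 !addr0 !subr0.
Qed.


Lemma cost_ext p p' : (forall x y, p x y = p' x y) -> cost p = cost p'.
Proof. by move=> h; rewrite /cost; apply: eq_bigr => x _; apply: eq_bigr => y _; rewrite h. Qed.

Lemma sum_prod (f g : V -> R) (c : R) :
  \sum_(x <- S) \sum_(y <- S) f x * g y * c = (\sum_(x <- S) f x) * (\sum_(y <- S) g y) * c.
Proof.
rewrite -mulrA mulr_suml; apply: eq_bigr => x _.
rewrite mulr_suml mulr_sumr; apply: eq_bigr => y _; ring.
Qed.

Definition RAL : R := \sum_(x <- S) (inA x)%:R * rL x.
Definition RAR : R := \sum_(y <- S) (inB y)%:R * rR y.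

Lemma cost_q : cost q <= FF + 2 * Z + RAL * RAR / Z.
Proof.
have pw : forall x y, q x y * dist R nb x y <=
    fl x y + 2 * (rL x * rR y / Z) + ((inA x)%:R * rL x) * ((inB y)%:R * rR y) / Z.
  move=> x y.
  have h1 : dg x * (x == y)%:R * dist R nb x y = 0.
    have [->|xy] := eqVneq x y; first by rewrite dist_xx mulr0.
    by rewrite mulr0 mul0r.
  have h2 : fl x y * dist R nb x y <= fl x y.
    rewrite /fl; case e: (ed x y); last by rewrite mulr0 mul0r.
    rewrite mulr1 -[X in _ <= X]mulr1 ler_wpM2l ?cc_ge0 //.
    apply: le_trans (dist_le x y 1 _) _ => //; exists y; split => //.
    by move: e; rewrite /ed => /andP[_ h].
  have h3 : rL x * rR y / Z * dist R nb x y <=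
      2 * (rL x * rR y / Z) + (inA x)%:R * rL x * ((inB y)%:R * rR y) / Z.
    have -> : 2 * (rL x * rR y / Z) + (inA x)%:R * rL x * ((inB y)%:R * rR y) / Z =
        rL x * rR y / Z * (2 + (inA x && inB y)%:R).
      by case: (inA x); case: (inB y); rewrite /=; ring.
    have [r0|rn] := eqVneq (rL x * rR y) 0.
      by rewrite r0 !mul0r.
    apply: ler_wpM2l.
      by rewrite divr_ge0 ?Z_ge0 // mulr_ge0 ?rL_ge0 ?rR_ge0.
    apply: dist_case.
      by apply: rL_supp; apply: contraNneq rn => ->; rewrite mul0r.
    by apply: rR_supp; apply: contraNneq rn => ->; rewrite mulr0.
  rewrite /q mulrDl mulrDl h1 add0r -addrA; exact: lerD h2 h3.
apply: le_trans (ler_sum _ (fun x _ => ler_sum _ (fun y _ => pw x y))) _.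
rewrite (eq_bigr (fun x => \sum_(y <- S) fl x y +
   (\sum_(y <- S) 2 * (rL x * rR y / Z) +
    \sum_(y <- S) (inA x)%:R * rL x * ((inB y)%:R * rR y) / Z))); last first.
  by move=> x _; rewrite -big_split -big_split /=; apply: eq_bigr => y _; rewrite addrA.
rewrite big_split big_split /= -/FF.
rewrite (eq_bigr (fun x => \sum_(y <- S) (2 * rL x) * rR y / Z)); last first.
  by move=> x _; apply: eq_bigr => y _; rewrite !mulrA.
rewrite sum_prod -mulr_sumr sum_rR -/Z sum_prod -/RAL -/RAR.
rewrite -addrA lerD2l lerD2r.
have [z0|zn] := eqVneq Z 0; first by rewrite z0 !mulr0.
by rewrite -mulrA mulfV // mulr1.
Qed.

Lemma RAL_le : RAL <= Z.
Proof.
apply: ler_sum => x _; case: (inA x); rewrite ?mul1r //= mul0r; exact: rL_ge0.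
Qed.

Lemma RAR_le : RAR <= Z.
Proof.
rewrite -sum_rR; apply: ler_sum => x _; case: (inB x); rewrite ?mul1r //= mul0r; exact: rR_ge0.
Qed.

Lemma RAL_ge0 : 0 <= RAL.
Proof. by apply: sumr_ge0 => x _; rewrite mulr_ge0 ?rL_ge0. Qed.
Lemma RAR_ge0 : 0 <= RAR.
Proof. by apply: sumr_ge0 => x _; rewrite mulr_ge0 ?rR_ge0. Qed.

Lemma prod_le_L : RAL * RAR / Z <= RAL.
Proof.
have [z0|zn] := eqVneq Z 0; first by rewrite z0 invr0 mulr0 RAL_ge0.
have zp : 0 < Z by rewrite lt_def zn Z_ge0.
rewrite -mulrA; apply: ler_piMr; first exact: RAL_ge0.
by rewrite ler_pdivrMr // mul1r RAR_le.
Qed.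

Lemma prod_le_R : RAL * RAR / Z <= RAR.
Proof.
have [z0|zn] := eqVneq Z 0; first by rewrite z0 invr0 mulr0 RAR_ge0.
have zp : 0 < Z by rewrite lt_def zn Z_ge0.
rewrite mulrAC mulrC; apply: ler_piMr; first exact: RAR_ge0.
by rewrite ler_pdivrMr // mul1r RAL_le.
Qed.


Lemma sum_eqj : \sum_(x <- S) (x == j)%:R = 1 :> R.
Proof.
rewrite (eq_bigr (fun x => (x == j)%:R * 1)); last by move=> x _; rewrite mulr1.
by rewrite sum_eqv ?inSj.
Qed.

Lemma sum_eqi : \sum_(x <- S) (x == i)%:R = 1 :> R.
Proof.
rewrite (eq_bigr (fun x => (x == i)%:R * 1)); last by move=> x _; rewrite mulr1.
by rewrite sum_eqv ?inSi.
Qed.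

Lemma NA_eq : \sum_(x <- S) (inA x)%:R = (deg nb i)%:R - 1 - tt :> R.
Proof.
have pw : forall x, (x \in nb i)%:R = (x == j)%:R + (inT x)%:R + (inA x)%:R :> R.
  move=> x; rewrite /inT /inA; have [->|xj] := eqVneq x j.
    by rewrite ij_nb j_nbj /= addr0 addr0.
  case: (x \in nb i); case: (x \in nb j); rewrite /= ?add0r ?addr0 //.
rewrite -sum_nbi (eq_bigr _ (fun x _ => pw x)) !big_split /= sum_eqj sum_T.
by ring.
Qed.

Lemma NB_eq : \sum_(y <- S) (inB y)%:R = (deg nb j)%:R - 1 - tt :> R.
Proof.
have pw : forall y, (y \in nb j)%:R = (y == i)%:R + (inT y)%:R + (inB y)%:R :> R.
  move=> y; rewrite /inT /inB; have [->|yi] := eqVneq y i.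
    by rewrite ji i_nbi /= addr0 addr0.
  case: (y \in nb i); case: (y \in nb j); rewrite /= ?add0r ?addr0 //.
rewrite -sum_nbj (eq_bigr _ (fun y _ => pw y)) !big_split /= sum_eqi sum_T.
by ring.
Qed.

Lemma RAL_eq : RAL = 1 - ai - ai * tt - FF.
Proof.
have pw : forall x, (inA x)%:R * rL x = ai * (inA x)%:R - out x.
  move=> x; case: (boolP (inA x)) => hx.
    by have [l0 d0] := inA_vals _ hx; rewrite /rL l0 d0 /=; ring.
  by rewrite /= out_zero // mul0r mulr0 subr0.
rewrite /RAL (eq_bigr _ (fun x _ => pw x)) sumrB -mulr_sumr NA_eq -/FF.
by rewrite !mulrBr ai_di mulr1.
Qed.

Lemma RAR_eq : RAR = 1 - bj - bj * tt - FF.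
Proof.
have pw : forall y, (inB y)%:R * rR y = bj * (inB y)%:R - inn y.
  move=> y; case: (boolP (inB y)) => hy.
    by have [r0 d0] := inB_vals _ hy; rewrite /rR r0 d0 /=; ring.
  by rewrite /= inn_zero // mul0r mulr0 subr0.
rewrite /RAR (eq_bigr _ (fun y _ => pw y)) sumrB -mulr_sumr NB_eq sum_inn.
by rewrite !mulrBr bj_dj mulr1.
Qed.

Definition si : R := (size (sharp_sq nb i j))%:R.
Definition sj : R := (size (sharp_sq nb j i))%:R.

Lemma FF_si : cc * si <= FF.
Proof.
have pw : forall x, cc * (x \in sharp_sq nb i j)%:R <= out x.
  move=> x; case: (boolP (x \in sharp_sq nb i j)) => h; last first.
    by rewrite mulr0 /out sumr_ge0 // => y _; exact: fl_ge0.
  move: h; rewrite /sharp_sq mem_filter => /andP[/andP[/andP[xj xnj] wn] xi].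
  have hA : inA x by rewrite /inA xi xj xnj.
  rewrite out_eq // /= mulr1 -[X in X <= _]mulr1 ler_wpM2l ?cc_ge0 // ler1n.
  by rewrite lt0n size_eq0.
apply: le_trans (ler_sum _ (fun x _ => pw x)).
rewrite -mulr_sumr sum_bool /si; apply: ler_wpM2l; first exact: cc_ge0.
rewrite ler_nat; apply/eq_leq.
rewrite -(count_predT (sharp_sq nb i j)).
apply: count_eq; rewrite ?uniqS ?filter_uniq ?nb_uniq // => y.
rewrite andbT; case e: (y \in sharp_sq nb i j); rewrite ?andbF //= andbT.
  by apply/esym; apply: (inS_nbi y); move: e; rewrite /sharp_sq mem_filter => /andP[_ ->].
Qed.

Lemma FF_sj : cc * sj <= FF.
Proof.
rewrite -sum_inn.
have pw : forall y, cc * (y \in sharp_sq nb j i)%:R <= inn y.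
  move=> y; case: (boolP (y \in sharp_sq nb j i)) => h; last first.
    by rewrite mulr0 /inn sumr_ge0 // => x _; exact: fl_ge0.
  move: h; rewrite /sharp_sq mem_filter => /andP[/andP[/andP[yi yni] wn] yj].
  have hB : inB y by rewrite /inB yi yj yni.
  rewrite inn_eq // /= mulr1 -[X in X <= _]mulr1 ler_wpM2l ?cc_ge0 // ler1n.
  by rewrite lt0n size_eq0.
apply: le_trans (ler_sum _ (fun x _ => pw x)).
rewrite -mulr_sumr sum_bool /sj; apply: ler_wpM2l; first exact: cc_ge0.
rewrite ler_nat; apply/eq_leq.
rewrite -(count_predT (sharp_sq nb j i)).
apply: count_eq; rewrite ?uniqS ?filter_uniq ?nb_uniq // => y.
rewrite andbT; case e: (y \in sharp_sq nb j i); rewrite ?andbF //= andbT.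
by apply/esym; apply: (inS_nbj y); move: e; rewrite /sharp_sq mem_filter => /andP[_ ->].
Qed.


Lemma inv_mm : ((maxn (deg nb i) (deg nb j))%:R)^-1 = mn /\
               ((minn (deg nb i) (deg nb j))%:R)^-1 = Mx.
Proof.
have pi : ((deg nb i)%:R : R) \is Num.pos by rewrite posrE ltr0n di_pos.
have pj : ((deg nb j)%:R : R) \is Num.pos by rewrite posrE ltr0n dj_pos.
case: (leqP (deg nb i) (deg nb j)) => h.
  have e : bj <= ai by rewrite /ai /bj lef_pV2 // ler_nat.
  by rewrite /mn /Mx min_r // max_l.
have e : ai <= bj by rewrite /ai /bj lef_pV2 // ler_nat ltnW.
by rewrite /mn /Mx min_l // max_r.
Qed.

Lemma FF_ge0 : 0 <= FF.
Proof. by apply: sumr_ge0 => x _; apply: sumr_ge0 => y _; exact: fl_ge0. Qed.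

Lemma tt_ge0 : 0 <= tt. Proof. exact: ler0n. Qed.

Lemma Ric_le : Ric R nb i j <=
  -2 + 2 * ai + 2 * bj + 2 * (mn * tt) + Mx * tt + 2 * FF.
Proof.
have hF := FF_ge0; have ht := tt_ge0; have hm := mn_ge0.
have hM : 0 <= Mx by apply: le_trans (ltW ai_gt0) Mx_ai.
have p1 : 0 <= mn * tt by rewrite mulr_ge0.
have p2 : 0 <= Mx * tt by rewrite mulr_ge0.
have ha := ai_gt0; have hb := bj_gt0.
rewrite /Ric /=; case: ifP => h1.
  have : ai = 1 \/ bj = 1.
    move: h1; case: (leqP (deg nb i) (deg nb j)) => h.
      by move=> /eqP e; left; rewrite /ai e invr1.
    by move=> /eqP e; right; rewrite /bj e invr1.
  case=> e; lra.
have [im iM] := inv_mm.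
rewrite -/ai -/bj -/tt im iM.
case: ifP => h2.
  rewrite addr0; lra.
have h3 : 2 * (cc * si) + 2 * (cc * sj) <= 4 * FF.
  have := FF_si; have := FF_sj; lra.
have -> : (gamma_max nb i j)%:R^-1 * mn * (si + sj) = cc * si + cc * sj.
  rewrite /cc /gam; ring.
have : cc * si + cc * sj <= 2 * FF by have := FF_si; have := FF_sj; lra.
lra.
Qed.

Lemma half_plan : exists p, coupling nb (1/2) i j p /\ cost p <= 1 - Ric R nb i j / 2.
Proof.
exists pp; split; first exact: pp_coupling.
have ce : cost pp = (1 - Mx) / 2 * cost delta + (1 / 2) * cost q.
  by rewrite -cost_lin; apply: cost_ext => x y; rewrite /pp; ring.
rewrite ce cost_delta.
have hd : (1 - Mx) / 2 * dist R nb i j <= (1 - Mx) / 2.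
  rewrite -[X in _ <= X]mulr1 ler_wpM2l ?dist_ij //.
  by rewrite divr_ge0 // subr_ge0 Mx_le1.
have hq := cost_q; have hL := prod_le_L; have hR := prod_le_R.
have hRic := Ric_le; have hZ := Z_eq; have hAL := RAL_eq; have hAR := RAR_eq.
case: (lerP ai bj) => hab.
  have em : mn = ai by rewrite /mn min_l.
  have eM : Mx = bj by rewrite /Mx max_r.
  rewrite eM in hd hZ hRic *; rewrite em in hZ hRic.
  lra.
have em : mn = bj by rewrite /mn min_r // ltW.
have eM : Mx = ai by rewrite /Mx max_l // ltW.
rewrite eM in hd hZ hRic *; rewrite em in hZ hRic.
lra.
Qed.

Lemma main_sec : exists kappa : R,
    ((1 - W1 nb x i j) / (1 - x) @[x --> (1 : R)^'-] --> kappa)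
    /\ Ric R nb i j <= kappa.
Proof.
have [p0 [cp0 hc0]] := half_plan.
have ne : forall a : R, 1/2 <= a -> a < 1 -> exists p, coupling nb a i j p.
  move=> a a1 a2; pose t : R := 2 * (1 - a).
  have -> : a = t * (1/2) + (1 - t) by rewrite /t; field.
  exists (fun x y => t * p0 x y + (1 - t) * delta x y); apply: coupling_comb => //.
  apply/andP; split; rewrite /t; lra.
have mono : forall x y : R, 1/2 <= x -> x <= y -> y < 1 -> slope x <= slope y.
  move=> x y hx xy y1; apply: slope_mono => //; apply: ne => //.
  by apply: le_lt_trans y1.
have half1 : (1/2 : R) < 1 by lra.
have cv : cvg (slope x @[x --> (1 : R)^'-]).
  apply: nondecreasing_at_left_is_cvgr.
    near=> b => x y; rewrite !in_itv /= => /andP[bx x1] /andP[_ y1] xy.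
    apply: mono => //; apply: le_trans (ltW bx).
    by apply: ltW; near: b; exact: nbhs_left_gt.
  near=> b; exists (1 + 1 / (deg nb j)%:R) => _ [y + <-].
  rewrite /= in_itv /= => /andP[hby y1]; apply: slope_ub => //; apply: ne => //.
  apply: le_trans (ltW hby); apply: ltW; near: b; exact: nbhs_left_gt.
exists (lim (slope x @[x --> (1 : R)^'-])); split; first exact: cv.
have hr : Ric R nb i j <= slope (1/2).
  have := W1_le _ _ cp0; rewrite /slope => hw.
  rewrite ler_pdivlMr; lra.
apply: (le_trans hr); apply: limr_ge => //.
near=> x; apply: mono; first exact: lexx.
  by apply: ltW; near: x; exact: nbhs_left_gt.
by near: x; exact: nbhs_left_lt.
Unshelve. all: by end_near.
Qed.

End Main.

Theorem theorem2 (R : realType) (V : eqType) (nb : V -> seq V)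
  (Hsimple : simple_graph nb) (Hconn : connected_graph nb)
  (i j : V) (Hij : adj nb i j) :
  exists kappa : R,
    ((1 - W1 nb x i j) / (1 - x) @[x --> (1 : R)^'-] --> kappa)
    /\ Ric R nb i j <= kappa.
Proof. exact: main_sec. Qed.
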